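(* Let $U,V$ be nonlocal vertex algebras, $R(x)$ a twisting operator for $(U,V)$, and $U\otimes_RV$ the twisted tensor product. Then the $\mathcal D$-operator of $U\otimes_RV$ is $\mathcal D\otimes1+1\otimes\mathcal D$ (where the two $\mathcal D$'s are those of $U$ and $V$). Moreover, for $u\in U$, $v\in V$ (identified with $u\otimes\mathbf 1$ and $\mathbf 1\otimes v$), $$Y_R(u,x)v\in(U\otimes V)[[x]],$$ and, writing $R(x)(v\otimes u)=\sum_{i=1}^r u_i\otimes v_i\otimes f_i(x)$ with $u_i\in U$, $v_i\in V$, $f_i\in\mathbb C((x))$, $$Y_R(v,x)u=e^{x(\mathcal D\otimes1+1\otimes\mathcal D)}\sum_{i=1}^r f_i(-x)\,Y_R(u_i,-x)v_i .$$
   Context: All vector spaces are over $\mathbb{C}$. A nonlocal vertex algebra is a vector space $V$ with a linear map $Y(\cdot,x):V\to \mathrm{Hom}(V,V((x)))$, $v\mapsto Y(v,x)=\sum_{n\in\mathbb Z}v_nx^{-n-1}$, and a vector $\mathbf 1\in V$ such that for all $v$: $Y(\mathbf 1,x)v=v$, $Y(v,x)\mathbf 1\in V[[x]]$, $\lim_{x\to0}Y(v,x)\mathbf 1=v$; and for all $u,v,w$ there is $k\ge0$ with $(x_0+x_2)^kY(u,x_0+x_2)Y(v,x_2)w=(x_0+x_2)^kY(Y(u,x_0)v,x_2)w$. Write $Y(x)(u\otimes v)=Y(u,x)v$. The $\mathcal D$-operator is $\mathcal Dv=v_{-2}\mathbf 1$. Conventions: $f(x_1\pm x_2)$ for $f\in\mathbb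 C((x))$ is expanded in nonnegative powers of the second variable; $T^{ij}$ denotes a map $T$ acting on the $i$-th and $j$-th tensor factors; maps are extended linearly over scalar series. Twisting operator for $(U,V)$: a linear map $R(x):V\otimes U\to U\otimes V\otimes\mathbb C((x))$ such that $R(x)(v\otimes\mathbf 1)=\mathbf 1\otimes v$, $R(x)(\mathbf 1\otimes u)=u\otimes\mathbf 1$, $R(x_1)(1\otimes Y(x_2))=(Y(x_2)\otimes1)R^{23}(x_1)R^{12}(x_1+x_2)$ on $V\otimes U\otimes U$, and $R(x_1)(Y(x_2)\otimes 1)=(1\otimes Y(x_2))R^{12}(x_1-x_2)R^{23}(x_1)$ on $V\otimes V\otimes U$. Twisted tensor product $U\otimes_RV$: the nonlocal vertex algebra on $U\otimes V$ with vacuum $\mathbf 1\otimes\mathbf 1$ and $Y_R(u\otimes v,x)(u'\otimes v')=\sum_i f_i(-x)Y(u,x)u'_i\otimes Y(v_i,x)v'$ where $R(x)(v\otimes u')=\sum_i u'_i\otimes v_i\otimes f_i(x)$ (i.e. $Y_R(x)=(Y(x)\otimes Y(x))R^{23}(-x)$). Elements $u\in U$, $v\in V$ are identified with $u\otimes\mathbf 1$, $\mathbf 1\otimes v$, which embeds $U$ and $V$ as subalgebras. *)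

(* Defs.v *)
From mathcomp Require Import all_boot all_order all_algebra.
From mathcomp Require Import complex Rstruct.
From Stdlib Require Import ClassicalEpsilon.

Set Implicit Arguments.
Unset Strict Implicit.
Unset Printing Implicit Defensive.
Import Order.TTheory GRing.Theory Num.Theory.
Local Open Scope ring_scope.

Definition C : fieldType := (Rdefinitions.R)[i].

Section Defs.
Variable K : fieldType.

Definition zpart (T : zmodType) (M : nat) (F : int -> T) : T :=
  \sum_(i < (2 * M).+1) F (i%:Z - M%:Z).
Definition zsum (T : zmodType) (F : int -> T) : T :=
  epsilon (inhabits 0)
    (fun s => exists N : nat, forall M : nat, (N <= M)%N -> zpart M F = s).
Definition nsum (T : zmodType) (F : nat -> T) : T :=
  epsilon (inhabits 0)
    (fun s => exists N : nat, forall M : nat, (N <= M)%N -> \sum_(i < M) F i = s).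

(* a series f is given by its coefficients: f n = coefficient of x^n *)
Definition laurent (f : int -> K) : Prop :=
  exists N : int, forall n : int, n < N -> f n = 0.
Definition sgnp (n : int) : K := if odd `|n|%N then -1 else 1.
Definition fneg (f : int -> K) : int -> K := fun n => sgnp n * f n.
Definition gbin (n : int) (j : nat) : K :=
  (\prod_(i < j) ((n - i%:Z)%:~R : K)) / (j`!)%:R.
(* coefficient of x1^c x2^e in f(x1 + x2) (expanded in nonnegative powers
   of x2) *)
Definition fplus (f : int -> K) (c e : int) : K :=
  if 0 <= e then f (c + e) * gbin (c + e) `|e|%N else 0.
(* coefficient of x1^c x2^e in f(x1 - x2) *)
Definition fminus (f : int -> K) (c e : int) : K := sgnp e * fplus f c e.

(* Y v w n = v_n w, the coefficient of x^(-n-1) in Y(v,x)w *)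
Section NVA.
Variable W : lmodType K.
Variable Y : W -> W -> int -> W.
Variable vac : W.

(* coefficient of x^m in Y(v,x)w *)
Definition Yx (v w : W) (m : int) : W := Y v w (- m - 1).

(* coefficient of x0^a x2^b in (x0+x2)^k Y(u,x0+x2)Y(v,x2)w *)
Definition wa_lhs (k : nat) (u v w : W) (a b : int) : W :=
  zsum (fun j : int => if 0 <= j then
          gbin (a + j) `|j|%N *: Y u (Y v w (j - b - 1)) (k%:Z - 1 - j - a)
        else 0).
(* coefficient of x0^a x2^b in (x0+x2)^k Y(Y(u,x0)v,x2)w *)
Definition wa_rhs (k : nat) (u v w : W) (a b : int) : W :=
  zsum (fun j : int => if (0 <= j) && (j <= k%:Z) then
          ('C(k, `|j|%N))%:R *: Y (Y u v (k%:Z - j - a - 1)) w (j - b - 1)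
        else 0).

Record nva : Prop := NVA {
  Y_linl : forall (w : W) (n : int) (c : K) (u1 u2 : W),
      Y (c *: u1 + u2) w n = c *: Y u1 w n + Y u2 w n;
  Y_linr : forall (u : W) (n : int) (c : K) (w1 w2 : W),
      Y u (c *: w1 + w2) n = c *: Y u w1 n + Y u w2 n;
  Y_trunc : forall u w : W, exists N : int, forall n : int, N <= n -> Y u w n = 0;
  Y_vac : forall (v : W) (n : int), Y vac v n = if n == -1 then v else 0;
  Y_create : forall (v : W) (n : int), 0 <= n -> Y v vac n = 0;
  Y_create_lim : forall v : W, Y v vac (-1) = v;
  Y_weak_assoc : forall u v w : W, exists k : nat, forall a b : int,
      wa_lhs k u v w a b = wa_rhs k u v w a b
}.

Definition Dop (v : W) : W := Y v vac (-2).
End NVA.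

Definition lin (W : lmodType K) (f : W -> K) : Prop :=
  forall (c : K) (x y : W), f (c *: x + y) = c * f x + f y.

(* An element of U (x) V is represented through its pairing with pairs of
   linear functionals (alpha, beta) on U and V: the tensor sum_i u_i (x) v_i
   is  fun alpha beta => sum_i alpha u_i * beta v_i.  Two such elements are
   equal in U (x) V iff they agree on all pairs of linear functionals. *)
Definition tens (U V : lmodType K) := (U -> K) -> (V -> K) -> K.
Definition tp (U V : lmodType K) (u : U) (v : V) : tens U V :=
  fun al be => al u * be v.
Definition tzero (U V : lmodType K) : tens U V := fun _ _ => 0.
Definition teq (U V : lmodType K) (s t : tens U V) : Prop :=
  forall (al : U -> K) (be : V -> K), lin al -> lin be -> s al be = t al be.

(* An element sum_i u_i (x) v_i (x) f_i(x) of U (x) V (x) C((x)) is given by the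
   list of triples (u_i, v_i, f_i);  t3c s n is its x^n coefficient in U (x) V. *)
Definition t3c (U V : lmodType K) (s : seq (U * V * (int -> K))) (n : int)
  : tens U V :=
  fun al be => \sum_(t <- s) t.2 n * (al t.1.1 * be t.1.2).
Definition t3eq (U V : lmodType K) (s s' : seq (U * V * (int -> K))) : Prop :=
  forall n : int, teq (t3c s n) (t3c s' n).
Definition laurent_list (U V : lmodType K) (s : seq (U * V * (int -> K))) : Prop :=
  forall t, List.In t s -> laurent t.2.
Definition t3add (U V : lmodType K) (s s' : seq (U * V * (int -> K))) := s ++ s'.
Definition t3scale (U V : lmodType K) (c : K) (s : seq (U * V * (int -> K))) :=
  [seq (t.1, fun n => c * t.2 n) | t <- s].

Section Twist.
Variables U V : lmodType K.
Variable YU : U -> U -> int -> U.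
Variable vU : U.
Variable YV : V -> V -> int -> V.
Variable vV : V.
(* R v u = a list of triples representing R(x)(v (x) u) *)
Variable R : V -> U -> seq (U * V * (int -> K)).

(* coefficient of x1^a x2^b of  R(x1)(1 (x) Y(x2)) (v (x) u (x) u') *)
Definition hex1_lhs (v : V) (u u' : U) (a b : int) : tens U V :=
  t3c (R v (Yx YU u u' b)) a.
(* coefficient of x1^a x2^b of (Y(x2) (x) 1) R^23(x1) R^12(x1+x2) (v (x) u (x) u') *)
Definition hex1_rhs (v : V) (u u' : U) (a b : int) : tens U V :=
  fun al be => \sum_(t <- R v u) \sum_(t2 <- R t.1.2 u')
    zsum (fun e => zsum (fun c =>
      fplus t.2 c e * t2.2 (a - c) * (al (Yx YU t.1.1 t2.1.1 (b - e)) * be t2.1.2))).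
(* coefficient of x1^a x2^b of  R(x1)(Y(x2) (x) 1) (v (x) v' (x) u) *)
Definition hex2_lhs (v v' : V) (u : U) (a b : int) : tens U V :=
  t3c (R (Yx YV v v' b) u) a.
(* coefficient of x1^a x2^b of (1 (x) Y(x2)) R^12(x1-x2) R^23(x1) (v (x) v' (x) u) *)
Definition hex2_rhs (v v' : V) (u : U) (a b : int) : tens U V :=
  fun al be => \sum_(t <- R v' u) \sum_(t2 <- R v t.1.1)
    zsum (fun e => zsum (fun c =>
      fminus t2.2 c e * t.2 (a - c) * (al t2.1.1 * be (Yx YV t2.1.2 t.1.2 (b - e))))).

Record twisting : Prop := Twisting {
  R_laurent : forall v u, laurent_list (R v u);
  R_linl : forall (u : U) (c : K) (v1 v2 : V),
      t3eq (R (c *: v1 + v2) u) (t3add (t3scale c (R v1 u)) (R v2 u));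
  R_linr : forall (v : V) (c : K) (u1 u2 : U),
      t3eq (R v (c *: u1 + u2)) (t3add (t3scale c (R v u1)) (R v u2));
  R_vacU : forall v : V, t3eq (R v vU) [:: (vU, v, fun n : int => if n == 0 then 1 else 0)];
  R_vacV : forall u : U, t3eq (R vV u) [:: (u, vV, fun n : int => if n == 0 then 1 else 0)];
  R_hex1 : forall (v : V) (u u' : U) (a b : int), teq (hex1_lhs v u u' a b) (hex1_rhs v u u' a b);
  R_hex2 : forall (v v' : V) (u : U) (a b : int), teq (hex2_lhs v v' u a b) (hex2_rhs v v' u a b)
}.

(* Twisted tensor product vertex operator:
   YR u v u' v' m = coefficient of x^m in Y_R(u (x) v, x)(u' (x) v')
     = sum_i f_i(-x) Y(u,x)u'_i (x) Y(v_i,x)v',  R(x)(v (x) u') = sum_i u'_i (x) v_i (x) f_i(x) *)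
Definition YR (u : U) (v : V) (u' : U) (v' : V) (m : int) : tens U V :=
  fun al be => \sum_(t <- R v u') zsum (fun p => zsum (fun q =>
     fneg t.2 p * (al (Yx YU u t.1.1 q) * be (Yx YV t.1.2 v' (m - p - q))))).
(* bilinear extension to general elements of U (x) V given as lists of pairs *)
Definition YRl (w w' : seq (U * V)) (m : int) : tens U V :=
  fun al be => \sum_(x <- w) \sum_(y <- w') YR x.1 x.2 y.1 y.2 m al be.
(* D-operator of U (x)_R V:  w_{-2}(1 (x) 1) = coefficient of x^1 in Y_R(w,x)(1 (x) 1) *)
Definition DR (w : seq (U * V)) : tens U V := YRl w [:: (vU, vV)] 1.
Definition DD (w : seq (U * V)) : tens U V :=
  fun al be => \sum_(x <- w)
    (al (Dop YU vU x.1) * be x.2 + al x.1 * be (Dop YV vV x.2)).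
(* the operator D (x) 1 + 1 (x) D acting on the pairing representation *)
Definition Tt (w : tens U V) : tens U V :=
  fun al be => w (fun u => al (Dop YU vU u)) be + w al (fun v => be (Dop YV vV v)).
(* coefficient of x^k of  sum_i f_i(-x) Y_R(u_i,-x) v_i,  for s = [(u_i,v_i,f_i)] *)
Definition Gser (s : seq (U * V * (int -> K))) (k : int) : tens U V :=
  fun al be => \sum_(t <- s) zsum (fun p =>
     fneg t.2 p * fneg (fun n => YR t.1.1 vV vU t.1.2 n al be) (k - p)).
(* coefficient of x^m of e^{x(D (x) 1 + 1 (x) D)} Gser s *)
Definition expD_G (s : seq (U * V * (int -> K))) (m : int) : tens U V :=
  fun al be => nsum (fun j : nat =>
     (j`!%:R)^-1 * iter j Tt (Gser s (m - j%:Z)) al be).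
End Twist.
End Defs.

(* Main.v *)
Require Import Defs.
From mathcomp Require Import all_boot all_order all_algebra.
From mathcomp Require Import complex Rstruct.
From mathcomp Require Import zify ring lra.
From Stdlib Require Import ClassicalEpsilon FunctionalExtensionality.
Set Implicit Arguments.
Unset Strict Implicit.
Unset Printing Implicit Defensive.
Import Order.TTheory GRing.Theory Num.Theory.
Local Open Scope ring_scope.

Lemma natrC_neq0 (n : nat) : (n.+1%:R : C) != 0.
Proof. change (n.+1%:R != 0 :> Rdefinitions.R[i]); by rewrite pnatr_eq0. Qed.
Lemma factC_neq0 (n : nat) : ((n`!)%:R : C) != 0.
Proof. have := fact_gt0 n; case: (n`!) => // k _; exact: natrC_neq0. Qed.

Section Zs.
Variable T : zmodType.

Lemma zsum_eq (F : int -> T) s :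
  (exists N : nat, forall M : nat, (N <= M)%N -> zpart M F = s) -> zsum F = s.
Proof.
move=> [N HN]; rewrite /zsum.
have [N' HN'] := epsilon_spec (inhabits (0:T))
  (fun s => exists N : nat, forall M : nat, (N <= M)%N -> zpart M F = s)
  (ex_intro _ s (ex_intro _ N HN)).
by rewrite -(HN' (maxn N N')) ?leq_maxr // HN // leq_maxl.
Qed.

Lemma zpartS (F : int -> T) M :
  zpart M.+1 F = F (- (M.+1)%:Z) + zpart M F + F (M.+1)%:Z.
Proof.
rewrite /zpart (_ : (2 * M.+1).+1 = ((2*M).+1).+2); last by lia.
rewrite big_ord_recl big_ord_recr /= -addrA; congr (F _ + _).
  by rewrite sub0r.
congr (_ + F _); last by rewrite /bump /= add1n; lia.
by apply: eq_bigr => i _; congr F; rewrite /bump /= add1n; lia.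
Qed.

Definition suppB (M : nat) (F : int -> T) :=
  forall i : int, (i < - M%:Z) \/ (M%:Z < i) -> F i = 0.

Lemma zsum_zpart M F : suppB M F -> zsum F = zpart M F.
Proof.
move=> H; apply: zsum_eq; exists M => M'.
elim: M' => [|M' IH]; first by rewrite leqn0 => /eqP ->.
rewrite leq_eqVlt => /orP [/eqP <- //|]; rewrite ltnS => HM.
rewrite zpartS -(IH HM) (H (- _)) ?(H (Posz _)) ?addr0 ?add0r //; lia.
Qed.

Lemma zsum_single (F : int -> T) j : (forall i, i != j -> F i = 0) -> zsum F = F j.
Proof.
move=> H; rewrite (@zsum_zpart (absz j)); last first.
  move=> i Hi; apply: H; apply/eqP; lia.
rewrite /zpart.
rewrite (eq_bigr (fun i : 'I__ => if (i : nat) == absz (j + (absz j)%:Z) then F ((i : nat)%:Z - (absz j)%:Z) else 0)); last first.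
  move=> i _; case: eqP => // Hi; apply: H; apply/eqP; lia.
rewrite -big_mkcond /=. rewrite (big_ord1_eq _ (fun i : nat => F (i%:Z - (absz j)%:Z))); rewrite ifT; last by lia.
congr F; lia.
Qed.

Lemma zsum0 : zsum (fun _ : int => (0 : T)) = 0.
Proof. by rewrite (@zsum_single _ 0). Qed.

Lemma zsum01 (F : int -> T) : (forall i, i != 0 -> i != 1 -> F i = 0) ->
  zsum F = F 0 + F 1.
Proof.
move=> H; rewrite (@zsum_zpart 1); last by move=> i Hi; apply: H; apply/eqP; lia.
rewrite /zpart !big_ord_recr big_ord0 /= add0r H ?add0r //.

Qed.

Lemma zpart_sum (I : Type) (r : seq I) M (F : I -> int -> T) :
  zpart M (fun i => \sum_(x <- r) F x i) = \sum_(x <- r) zpart M (F x).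
Proof. by rewrite /zpart exchange_big. Qed.

Lemma zpart0 M : zpart M (fun _ => (0:T)) = 0.
Proof. by rewrite /zpart big1. Qed.

Lemma nsum_eq (F : nat -> T) J : (forall j, (J <= j)%N -> F j = 0) ->
  nsum F = \sum_(j < J) F j.
Proof.
move=> H.
have aux : forall K, (J <= K)%N -> \sum_(i < K) F i = \sum_(j < J) F j.
  elim => [|K IH]; first by rewrite leqn0 => /eqP ->.
  rewrite leq_eqVlt => /orP [/eqP <- //|]; rewrite ltnS => HK.
  by rewrite big_ord_recr /= H // addr0 IH.
rewrite /nsum.
have [N' HN'] := epsilon_spec (inhabits (0:T))
  (fun s => exists N : nat, forall M : nat, (N <= M)%N -> \sum_(i < M) F i = s)
  (ex_intro _ (\sum_(j < J) F j) (ex_intro _ J aux)).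
by rewrite -(HN' (maxn J N')) ?leq_maxr // aux // leq_maxl.
Qed.
End Zs.

Section NV.
Variable W : lmodType C.
Variable Y : W -> W -> int -> W.
Variable vac : W.
Hypothesis HY : nva Y vac.

Lemma Y0r u n : Y u 0 n = 0.
Proof.
have := Y_linr HY u n 1 0 0; rewrite !scale1r addr0 => h.
by apply: (addrI (Y u 0 n)); rewrite addr0 -h.
Qed.
Lemma Y0l w n : Y 0 w n = 0.
Proof.
have := Y_linl HY w n 1 0 0; rewrite !scale1r addr0 => h.
by apply: (addrI (Y 0 w n)); rewrite addr0 -h.
Qed.

Lemma Yc (x : W) (n : int) : 0 <= n -> Y x vac n = 0.
Proof. move=> h; exact: (Y_create HY x h). Qed.

Lemma Yx_vac (x : W) q : Yx Y vac x q = if q == 0 then x else 0.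
Proof. rewrite /Yx (Y_vac HY) //; congr (if _ then _ else _); apply/eqP/eqP; lia. Qed.

Lemma Yx0 x : Yx Y x vac 0 = x.
Proof. by rewrite /Yx sub0r; exact: (Y_create_lim HY x). Qed.

Lemma Yxneg x (n : int) : n < 0 -> Yx Y x vac n = 0.
Proof. move=> hn; rewrite /Yx Yc //; lia. Qed.

Lemma D_c (x : W) (n : nat) :
  Dop Y vac (Yx Y x vac n) = n.+1%:R *: Yx Y x vac n.+1.
Proof.
have [k Hk] := Y_weak_assoc HY x vac vac.
have := Hk (n%:Z + k%:Z) 1.
rewrite /wa_lhs /wa_rhs.
rewrite (zsum_single (j := 1)); last first.
  move=> i Hi; case: ifP => // Hi0.
  rewrite (Y_vac HY) ifF ?Y0r ?scaler0 //; apply/eqP; move/eqP: Hi; lia.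
rewrite zsum01; last first.
  move=> i Hi0 Hi1; case: ifP => // /andP [h1 h2].
  rewrite Yc ?scaler0 //; move/eqP: Hi0; move/eqP: Hi1; lia.
rewrite /= (Y_vac HY) /= bin0 scale1r.
rewrite /gbin big_ord1 /= divr1.
have e1 : (k%:Z - 1 - 1 - (n%:Z + k%:Z)) = - (n.+1)%:Z - 1 by lia.
have e2 : (k%:Z - 0 - (n%:Z + k%:Z) - 1) = - n%:Z - 1 by lia.
have e3 : (k%:Z - 1 - (n%:Z + k%:Z) - 1) = - (n.+1)%:Z - 1 by lia.
have e5 : (1 - 1 - 1 : int) = -1 by [].
have e6 : (n%:Z + k%:Z + 1 - 0%:Z)%:~R = (n + k).+1%:R :> C.
  by rewrite (_ : n%:Z + k%:Z + 1 - 0%:Z = ((n + k).+1)%:Z); last lia.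
rewrite e1 e2 e3 e5 e6 (Y_create_lim HY).
set z := Y x vac _.
have -> : (if (1 <= k)%N then 'C(k, 1)%:R *: z else 0) = k%:R *: z.
  clearbody z; case: (k) => [|k'] //=; [by rewrite mulr0n scale0r | by rewrite bin1].
rewrite /Dop /Yx => h.
rewrite (_ : Y (Y x vac (- n%:Z - 1)) vac (-1 - 1) = (n + k).+1%:R *: z - k%:R *: z).
  rewrite -scalerBl -natrB; last by lia.
  by rewrite (_ : ((n + k).+1 - k)%N = n.+1) //; lia.
by rewrite h addrK.
Qed.
End NV.

Section Lin.
Variable W : lmodType C.
Lemma lin0 (al : W -> C) : lin al -> al 0 = 0.
Proof.
move=> h; have := h 1 0 0; rewrite scaler0 addr0 mul1r => e.
by apply: (addrI (al 0)); rewrite addr0 -e.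
Qed.
Lemma linZ (al : W -> C) c x : lin al -> al (c *: x) = c * al x.
Proof. by move=> h; have := h c x 0; rewrite addr0 lin0 // addr0. Qed.
Lemma lin_r (Y : W -> W -> int -> W) vac (al : W -> C) u n :
  nva Y vac -> lin al -> lin (fun z => al (Y u z n)).
Proof. by move=> HY h c x y; rewrite /= (Y_linr HY) h. Qed.
Lemma lin_l (Y : W -> W -> int -> W) vac (al : W -> C) w n :
  nva Y vac -> lin al -> lin (fun z => al (Y z w n)).
Proof. by move=> HY h c x y; rewrite /= (Y_linl HY) h. Qed.
End Lin.

Section Gen.
Variable T : zmodType.
Lemma zpart_ext M (F G : int -> T) : (forall i, F i = G i) -> zpart M F = zpart M G.
Proof. by move=> h; apply: eq_bigr => i _; rewrite h. Qed.
Lemma zsum_ext (F G : int -> T) : (forall i, F i = G i) -> zsum F = zsum G.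
Proof. by move=> h; congr zsum; apply: functional_extensionality. Qed.

Lemma dbl (G : int -> int -> T) (A B Cc : int) :
  (forall p q, p < A \/ q < B \/ Cc < p + q -> G p q = 0) ->
  forall M : nat, (absz A + absz B + absz Cc <= M)%N ->
  zsum (fun p => zsum (G p)) = zpart M (fun p => zpart M (G p)).
Proof.
move=> H M HM.
rewrite (zsum_ext (G := fun p => zpart M (G p))); last first.
  move=> p; apply: zsum_zpart => i Hi.
  case: (boolP (p < A)) => hp; first by apply: H; left.
  apply: H; right; lia.
apply: zsum_zpart => p Hp; rewrite -(zpart0 T M); apply: zpart_ext => i.
case: (boolP (i < B)) => hp; first by apply: H; right; left.
apply: H; lia.
Qed.

Lemma eq_big_In (X : Type) (s : seq X) (F G : X -> T) :
  (forall t, List.In t s -> F t = G t) -> \sum_(t <- s) F t = \sum_(t <- s) G t.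
Proof.
elim: s => [|a s IH] H; first by rewrite !big_nil.
rewrite !big_cons H /=; last by left.
by rewrite IH // => t ht; apply: H; right.
Qed.
End Gen.

Lemma ex_bound_list (X : Type) (P : nat -> X -> Prop) (l : seq X) :
  (forall t, List.In t l -> exists M0, forall M, (M0 <= M)%N -> P M t) ->
  exists M0, forall M, (M0 <= M)%N -> forall t, List.In t l -> P M t.
Proof.
elim: l => [|a l IH] H; first by exists 0%N.
have [Ma Ha] := H a (or_introl erefl).
have [Ml Hl] := IH (fun t ht => H t (or_intror ht)).
exists (maxn Ma Ml) => M HM t [<-|ht].
  by apply: Ha; apply: leq_trans HM; rewrite leq_maxl.
by apply: Hl => //; apply: leq_trans HM; rewrite leq_maxr.
Qed.

Section Tw.
Variables U V : lmodType C.
Variable YU : U -> U -> int -> U.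
Variable vU : U.
Variable YV : V -> V -> int -> V.
Variable vV : V.
Variable R : V -> U -> seq (U * V * (int -> C)).
Hypothesis HU : nva YU vU.
Hypothesis HV : nva YV vV.
Hypothesis HR : twisting YU vU YV vV R.

Definition YRs (s : seq (U * V * (int -> C))) (u : U) (v' : V) (m : int) : tens U V :=
  fun al be => \sum_(t <- s) zsum (fun p => zsum (fun q =>
     fneg t.2 p * (al (Yx YU u t.1.1 q) * be (Yx YV t.1.2 v' (m - p - q))))).

Lemma YRs_zpart s u v' m al be : laurent_list s -> lin al -> lin be ->
  exists M0, forall M, (M0 <= M)%N ->
  YRs s u v' m al be = zpart M (fun p => zpart M (fun q =>
     sgnp C p * t3c s p (fun z => al (Yx YU u z q)) (fun y => be (Yx YV y v' (m - p - q))))).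
Proof.
move=> Hs hal hbe.
set G := fun (t : U * V * (int -> C)) p q =>
  fneg t.2 p * (al (Yx YU u t.1.1 q) * be (Yx YV t.1.2 v' (m - p - q))).
have [M0 HM0] : exists M0, forall M, (M0 <= M)%N -> forall t, List.In t s ->
   zsum (fun p => zsum (G t p)) = zpart M (fun p => zpart M (G t p)).
  apply: (@ex_bound_list _ (fun M t => zsum (fun p => zsum (G t p)) =
   zpart M (fun p => zpart M (G t p)))) => t ht.
  move: ht => /Hs [Nt HNt].
  have [N1 H1] := Y_trunc HU u t.1.1.
  have [N2 H2] := Y_trunc HV t.1.2 v'.
  exists (absz Nt + absz (- N1)%R + absz (m + N2)%R)%N => M HM.
  apply: (@dbl _ (G t) Nt (- N1) (m + N2)) => // p q [h|[h|h]]; rewrite /G.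
  - by rewrite /fneg HNt // mulr0 mul0r.
  - by rewrite /Yx H1 ?(lin0 hal) ?mul0r ?mulr0 //; lia.
  - by rewrite /Yx H2 ?(lin0 hbe) ?mulr0 //; lia.
exists M0 => M HM.
rewrite /YRs (eq_big_In (G := fun t => zpart M (fun p => zpart M (G t p)))); last first.
  by move=> t' ht'; apply: HM0.
rewrite -zpart_sum; apply: zpart_ext => p.
rewrite -zpart_sum; apply: zpart_ext => q.
rewrite /t3c /G /fneg mulr_sumr; apply: eq_bigr => t' _.
by rewrite -mulrA.
Qed.

Lemma transfer s s' u v' m al be :
  laurent_list s -> laurent_list s' -> t3eq s s' -> lin al -> lin be ->
  YRs s u v' m al be = YRs s' u v' m al be.
Proof.
move=> Hs Hs' Hss hal hbe.
have [M1 H1] := YRs_zpart u v' m Hs hal hbe.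
have [M2 H2] := YRs_zpart u v' m Hs' hal hbe.
rewrite (H1 (maxn M1 M2)) ?leq_maxl // (H2 (maxn M1 M2)) ?leq_maxr //.
apply: zpart_ext => p; apply: zpart_ext => q; congr (_ * _).
apply: Hss.
  exact: (lin_r _ _ HU).
exact: (lin_l _ _ HV).
Qed.


Definition dl : int -> C := fun n : int => if n == 0 then 1 else 0.

Lemma laurent_dl (a : U) (b : V) : laurent_list [:: (a, b, dl)].
Proof. by move=> t [<-|//]; exists 0 => n hn; rewrite /dl /= ifF //; apply/eqP; lia. Qed.

Lemma YRs1 (a u : U) (b v' : V) m al be :
  YRs [:: (a, b, dl)] u v' m al be =
  zsum (fun q => al (Yx YU u a q) * be (Yx YV b v' (m - q))).
Proof.
rewrite /YRs big_seq1 (zsum_single (j := 0)); last first.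
  move=> p hp; rewrite -(zsum0 C); apply: zsum_ext => q.
  by rewrite /fneg /dl /= (negbTE hp) mulr0 mul0r.
by apply: zsum_ext => q; rewrite /fneg /dl /= mulr1 subr0 /sgnp /= mul1r.
Qed.

Lemma YRsvac (v : V) u v' m al be : lin al -> lin be ->
  YRs (R v vU) u v' m al be = YRs [:: (vU, v, dl)] u v' m al be.
Proof.
move=> hal hbe; apply: transfer => //.
  exact: (R_laurent HR). exact: laurent_dl. exact: (R_vacU HR).
Qed.

Lemma YR_D (u : U) (v : V) al be : lin al -> lin be ->
  YR YU YV R u v vU vV 1 al be = al (Dop YU vU u) * be v + al u * be (Dop YV vV v).
Proof.
move=> hal hbe.
rewrite (_ : YR YU YV R _ _ _ _ _ al be = YRs (R v vU) u vV 1 al be) //.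
rewrite YRsvac //.
rewrite YRs1 zsum01; last first.
  move=> q h0 h1; case: (boolP (q < 0)) => hq.
    by rewrite (Yxneg HU) ?(lin0 hal) ?mul0r.
  by rewrite (Yxneg HV) ?(lin0 hbe) ?mulr0 //; move/eqP: h0; move/eqP: h1; lia.
rewrite (Yx0 HU) subr0 addrC; congr (_ + _).
by rewrite (_ : 1 - 1 = 0) // (Yx0 HV).
Qed.

Lemma YR_neg (u : U) (v : V) m al be : lin al -> lin be -> m < 0 ->
  YR YU YV R u vV vU v m al be = 0.
Proof.
move=> hal hbe hm.
rewrite (_ : YR YU YV R _ _ _ _ _ al be = YRs (R vV vU) u v m al be) //.
rewrite YRsvac //.
rewrite YRs1 -(zsum0 C); apply: zsum_ext => q.
rewrite (Yx_vac HV); case: eqP => h; last by rewrite (lin0 hbe) mulr0.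
by rewrite (Yxneg HU) ?(lin0 hal) ?mul0r //; lia.
Qed.

Lemma YR_pure (x : U) (y : V) n al be : lin al -> lin be ->
  YR YU YV R x vV vU y n al be = al (Yx YU x vU n) * be y.
Proof.
move=> hal hbe.
rewrite (_ : YR YU YV R _ _ _ _ _ al be = YRs (R vV vU) x y n al be) //.
rewrite YRsvac //.
rewrite YRs1 (zsum_single (j := n)); last first.
  move=> q hq; rewrite (Yx_vac HV) ifF ?(lin0 hbe) ?mulr0 //.
  by apply/eqP; move/eqP: hq; lia.
by rewrite (Yx_vac HV) subrr eqxx.
Qed.

Lemma YRs_left s m al be : lin al -> lin be ->
  YRs s vU vV m al be = \sum_(t <- s) zsum (fun p =>
     fneg t.2 p * (al t.1.1 * be (Yx YV t.1.2 vV (m - p)))).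
Proof.
move=> hal hbe; apply: eq_bigr => t _; apply: zsum_ext => p.
rewrite (zsum_single (j := 0)); last first.
  by move=> q hq; rewrite (Yx_vac HU) (negbTE hq) (lin0 hal) mul0r mulr0.
by rewrite (Yx_vac HU) eqxx subr0.
Qed.


Local Notation TT := (Tt YU vU YV vV).
Local Notation DU := (Dop YU vU).
Local Notation DV := (Dop YV vV).

Lemma linDU (al : U -> C) : lin al -> lin (fun u => al (DU u)).
Proof. exact: (lin_l _ _ HU). Qed.
Lemma linDV (be : V -> C) : lin be -> lin (fun v => be (DV v)).
Proof. exact: (lin_l _ _ HV). Qed.

Lemma iter_teq (w1 w2 : tens U V) :
  (forall al be, lin al -> lin be -> w1 al be = w2 al be) ->
  forall j al be, lin al -> lin be -> iter j TT w1 al be = iter j TT w2 al be.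
Proof.
move=> H; elim=> [|j IH] al be hal hbe /=; first exact: H.
by rewrite /Tt !IH //; [exact: linDV | exact: linDU].
Qed.

Lemma iter_sum (I : Type) (r : seq I) (F : I -> tens U V) j al be :
  iter j TT (fun al be => \sum_(i <- r) F i al be) al be =
  \sum_(i <- r) iter j TT (F i) al be.
Proof.
elim: j al be => [|j IH] al be //=.
by rewrite /Tt !IH -big_split.
Qed.

Lemma iter_add (w1 w2 : tens U V) j al be :
  iter j TT (fun al be => w1 al be + w2 al be) al be =
  iter j TT w1 al be + iter j TT w2 al be.
Proof.
elim: j al be => [|j IH] al be //=.
by rewrite /Tt !IH addrACA.
Qed.

Lemma iter_scale (c : C) (w : tens U V) j al be :
  iter j TT (fun al be => c * w al be) al be = c * iter j TT w al be.
Proof.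
elim: j al be => [|j IH] al be //=.
by rewrite /Tt !IH mulrDr.
Qed.

Lemma iter_zero j al be : iter j TT (fun _ _ => 0) al be = 0.
Proof.
elim: j al be => [|j IH] al be //=.
by rewrite /Tt !IH addr0.
Qed.

Lemma iter_commV (w : tens U V) j al be :
  iter j TT (fun al be => w al (fun v => be (DV v))) al be =
  iter j TT w al (fun v => be (DV v)).
Proof.
elim: j al be => [|j IH] al be //=.
by rewrite /Tt !IH.
Qed.

Lemma iter_S (w : tens U V) j al be :
  iter j TT (TT w) al be = iter j.+1 TT w al be.
Proof. by rewrite iterSr. Qed.

Definition Aw (x : U) (y : V) (k : int) : tens U V :=
  fun al be => sgnp C k * (al (Yx YU x vU k) * be y).

Lemma sgnpS (n : nat) : sgnp C n.+1 = - sgnp C n.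
Proof. by rewrite /sgnp /=; case: (odd n) => /=; rewrite ?opprK. Qed.

Lemma Aw_DU x y (n : nat) al be : lin al -> lin be ->
  Aw x y n (fun u => al (DU u)) be = - (n.+1%:R) * Aw x y n.+1 al be.
Proof.
move=> hal hbe; rewrite /Aw (D_c HU) (linZ _ _ hal) sgnpS.
ring.
Qed.

Lemma Aw_DV x y (n : nat) al be : lin al -> lin be ->
  Aw x y n al (fun v => be (DV v)) = TT (Aw x y n) al be + n.+1%:R * Aw x y n.+1 al be.
Proof.
move=> hal hbe; rewrite /Tt (Aw_DU _ _ _ hal hbe); ring.
Qed.


Lemma Phi_nat x y (n : nat) al be : lin al -> lin be ->
  \sum_(j < n.+1) (j`!%:R)^-1 * iter j TT (Aw x y (n - j)%N) al be =
  al x * be (Yx YV y vV n).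
Proof.
elim: n al be => [|n IH] al be hal hbe.
  rewrite big_ord1 /= /Aw (Yx0 HU) (Yx0 HV) /sgnp /= invr1 !mul1r //.
apply: (mulfI (natrC_neq0 n)).
have step : n.+1%:R * \sum_(j < n.+2) (j`!%:R)^-1 * iter j TT (Aw x y (n.+1 - j)%N) al be =
  \sum_(j < n.+1) (j`!%:R)^-1 * iter j TT (Aw x y (n - j)%N) al (fun v => be (DV v)).
  rewrite big_distrr /=.
  transitivity (\sum_(j < n.+2) (j%:R * ((j`!%:R)^-1 * iter j TT (Aw x y (n.+1 - j)%N) al be)
     + (n.+1 - j)%N%:R * ((j`!%:R)^-1 * iter j TT (Aw x y (n.+1 - j)%N) al be))).
    apply: eq_bigr => j _; rewrite -mulrDl -natrD subnKC //.
    by have := ltn_ord j; lia.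
  rewrite big_split /= [X in X + _]big_ord_recl [X in _ + X]big_ord_recr /= subnn mulr0n !mul0r add0r addr0.
  rewrite -big_split /=; apply: eq_bigr => j _.
  have hj := ltn_ord j.
  rewrite -(iter_commV (Aw x y (n - j)%N)).
  rewrite (@iter_teq (fun al be => Aw x y (n - j)%N al (fun v => be (DV v)))
     (fun al be => TT (Aw x y (n - j)%N) al be + (n - j).+1%:R * Aw x y (n - j).+1 al be)
     _ j al be hal hbe); last by move=> al' be' hal' hbe'; apply: Aw_DV.
  rewrite iter_add iter_scale iter_S.
  rewrite /bump /= add1n add0n subSS -subSn //.
  rewrite factS natrM invfM.
  set a := TT (iter j TT (Aw x y (n - j)%N)) al be.
  set b := iter j TT _ al be.
  clearbody a b.
  rewrite !mulrA mulfV ?natrC_neq0 // mul1r mulrDr; congr (_ + _).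
  by rewrite mulrCA mulrA.
rewrite step IH //; last exact: linDV.
by rewrite (D_c HV) (linZ _ _ hbe) mulrCA.
Qed.


Lemma Phi_int x y (N : int) (J : nat) al be : lin al -> lin be -> N < J%:Z ->
  \sum_(j < J) (j`!%:R)^-1 * iter j TT (Aw x y (N - j%:Z)) al be =
  al x * be (Yx YV y vV N).
Proof.
move=> hal hbe; case: N => [n|n] hN.
  have e : \sum_(j < J) (j`!%:R)^-1 * iter j TT (Aw x y (n%:Z - j%:Z)) al be =
           \sum_(j < J | (j < n.+1)%N) (j`!%:R)^-1 * iter j TT (Aw x y (n%:Z - j%:Z)) al be.
    rewrite [RHS]big_mkcond /=; apply: eq_bigr => j _; case: ifP => // hj.
    rewrite (@iter_teq _ (fun _ _ => 0) _ j al be hal hbe) ?iter_zero ?mulr0 //.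
    move=> al' be' hal' hbe'; rewrite /Aw (Yxneg HU) ?(lin0 hal') ?mul0r ?mulr0 //.
    by move/negbT: hj; lia.
  rewrite e -(big_ord_widen _ (fun j => (j`!%:R)^-1 * iter j TT (Aw x y (n%:Z - j%:Z)) al be)); last by lia.
  rewrite -(Phi_nat x y n hal hbe); apply: eq_bigr => j _.
  by rewrite subzn // -ltnS ltn_ord.
rewrite NegzE big1; last first.
  move=> j _.
  rewrite (@iter_teq _ (fun _ _ => 0) _ j al be hal hbe) ?iter_zero ?mulr0 //.
  move=> al' be' hal' hbe'; rewrite /Aw (Yxneg HU) ?(lin0 hal') ?mul0r ?mulr0 //.
  by lia.
by rewrite (Yxneg HV) ?(lin0 hbe) ?mulr0 //; lia.
Qed.

Lemma laurent_list_bound (s : seq (U * V * (int -> C))) : laurent_list s ->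
  exists N : int, forall t n, List.In t s -> n < N -> t.2 n = 0.
Proof.
elim: s => [|a s IH] H; first by exists 0.
have [N1 H1] := H a (or_introl erefl).
have [N2 H2] := IH (fun t ht => H t (or_intror ht)).
exists (N1 - `|N1| - `|N2|) => t n [<-|ht] hn.
  by apply: H1; lia.
by apply: (H2 t) => //; lia.
Qed.

Lemma Gser_eq s (Nmin : int) k al be : lin al -> lin be ->
  (forall t n, List.In t s -> n < Nmin -> t.2 n = 0) ->
  forall M : nat, (absz Nmin + absz k <= M)%N ->
  Gser YU vU YV vV R s k al be =
  \sum_(t <- s) zpart M (fun p => fneg t.2 p * Aw t.1.1 t.1.2 (k - p) al be).
Proof.
move=> hal hbe HN M HM; apply: eq_big_In => t ht.
rewrite -(@zsum_zpart _ M); last first.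
  move=> i hi; case: (boolP (i < Nmin)) => h.
    by rewrite /fneg HN // mulr0 mul0r.
  by rewrite /Aw (Yxneg HU) ?(lin0 hal) ?mul0r ?mulr0 //; lia.
apply: zsum_ext => p.
by rewrite [X in _ * X]/fneg YR_pure.
Qed.

Lemma part3 u v s : laurent_list s -> t3eq s (R v u) ->
  forall m, teq (YR YU YV R vU v u vV m) (expD_G YU vU YV vV R s m).
Proof.
move=> Hs Hss m al be hal hbe.
rewrite (_ : YR YU YV R vU v u vV m al be = YRs (R v u) vU vV m al be) //.
rewrite -(@transfer s (R v u) vU vV m al be Hs (R_laurent HR (v:=v) (u:=u)) Hss hal hbe).
rewrite YRs_left //.
have [Nmin HN] := laurent_list_bound Hs.
set J := (absz (m - Nmin)).+1.
set M := (absz Nmin + absz m + J)%N.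
rewrite (eq_big_In (G := fun t => zpart M (fun p => fneg t.2 p *
            (al t.1.1 * be (Yx YV t.1.2 vV (m - p)))))); last first.
  move=> t ht; apply: zsum_zpart => i hi.
  case: (boolP (i < Nmin)) => h; first by rewrite /fneg HN // mulr0 mul0r.
  by rewrite (Yxneg HV) ?(lin0 hbe) ?mulr0 //; lia.
rewrite /expD_G (@nsum_eq _ _ J); last first.
  move=> j hj.
  rewrite (@iter_teq _ (fun _ _ => 0) _ j al be hal hbe) ?iter_zero ?mulr0 //.
  move=> al' be' hal' hbe'.
  rewrite (@Gser_eq s Nmin _ al' be' hal' hbe' HN (absz Nmin + absz (m - j%:Z))) //.
  rewrite (eq_big_In (G := fun _ => 0)) ?big1 // => t ht.
  rewrite -(zpart0 C (absz Nmin + absz (m - j%:Z))); apply: zpart_ext => p.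
  case: (boolP (p < Nmin)) => h; first by rewrite /fneg HN // mulr0 mul0r.
  by rewrite /Aw (Yxneg HU) ?(lin0 hal') ?mul0r ?mulr0 //; lia.
rewrite (eq_big_In (G := fun t => zpart M (fun p => fneg t.2 p *
   \sum_(j < J) (j`!%:R)^-1 * iter j TT (Aw t.1.1 t.1.2 (m - p - j%:Z)) al be))); last first.
  move=> t ht; apply: zpart_ext => p.
  case: (boolP (p < Nmin)) => h; first by rewrite /fneg HN // mulr0 !mul0r.
  by rewrite Phi_int //; lia.
rewrite [RHS](eq_bigr (fun j : 'I_J => (j`!%:R)^-1 * \sum_(t <- s) zpart M (fun p =>
   fneg t.2 p * iter j TT (Aw t.1.1 t.1.2 (m - j%:Z - p)) al be))); last first.
  move=> j _; congr (_ * _).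
  rewrite (@iter_teq _ (fun al be => \sum_(t <- s) zpart M (fun p =>
     fneg t.2 p * Aw t.1.1 t.1.2 (m - j%:Z - p) al be)) _ j al be hal hbe); last first.
    move=> al' be' hal' hbe'; apply: (Gser_eq (Nmin := Nmin)) => //.
    by have := ltn_ord j; rewrite /M /J; lia.
  rewrite (@iter_sum _ s (fun t al be => zpart M (fun p =>
     fneg t.2 p * Aw t.1.1 t.1.2 (m - j%:Z - p) al be)) j al be).
  apply: eq_bigr => t _; rewrite /zpart.
  rewrite (@iter_sum _ _ (fun (i : 'I_(2 * M).+1) al be => fneg t.2 ((i : nat)%:Z - M%:Z) *
     Aw t.1.1 t.1.2 (m - j%:Z - ((i : nat)%:Z - M%:Z)) al be) j al be).
  by apply: eq_bigr => i _; rewrite iter_scale.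
rewrite /zpart.
under [RHS]eq_bigr => j _ do rewrite big_distrr /=.
rewrite [RHS]exchange_big /=; apply: eq_bigr => t _.
under [RHS]eq_bigr => j _ do rewrite big_distrr /=.
rewrite [RHS]exchange_big /=; apply: eq_bigr => i _.
rewrite big_distrr /=; apply: eq_bigr => j _.
rewrite mulrCA; congr (_ * (_ * iter _ _ (Aw _ _ _) _ _)).
by rewrite addrAC.
Qed.

End Tw.

Theorem proposition2p5
  (U V : lmodType C)
  (YU : U -> U -> int -> U) (vU : U)
  (YV : V -> V -> int -> V) (vV : V)
  (R : V -> U -> seq (U * V * (int -> C))) :
  nva YU vU -> nva YV vV -> twisting YU vU YV vV R ->
  (* the D-operator of U (x)_R V is D (x) 1 + 1 (x) D *)
  (forall w : seq (U * V),
      teq (DR YU vU YV vV R w) (DD YU vU YV vV w)) /\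
  (* Y_R(u,x)v lies in (U (x) V)[[x]] *)
  (forall (u : U) (v : V) (m : int), m < 0 ->
      teq (YR YU YV R u vV vU v m) (@tzero C U V)) /\
  (* skew-symmetry type formula, for any decomposition s of R(x)(v (x) u) *)
  (forall (u : U) (v : V) (s : seq (U * V * (int -> C))),
      laurent_list s -> t3eq s (R v u) ->
      forall m : int,
        teq (YR YU YV R vU v u vV m) (expD_G YU vU YV vV R s m)).
Proof.
move=> HU HV HR; split; [|split].
- move=> w al be hal hbe; rewrite /DR /YRl /DD; apply: eq_bigr => x _.
  by rewrite big_seq1 /= (YR_D HU HV HR).
- by move=> u v m hm al be hal hbe; rewrite (YR_neg HU HV HR).
- by move=> u v s Hs Hss m; apply: (part3 HU HV HR).
Qed.
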